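(* Let $S_N$ be the star graph on $N$ vertices. Then its PIR capacity satisfies $\mathscr{C}(S_N)\le O(N^{-1/2})$ as $N\to\infty$.
   Context: The star graph $S_N$ has $N$ vertices (servers), one of which has degree $N-1$ and the others degree $1$; so there are $K=N-1$ files, file $W_i$ being stored on leaf server $S_i$ and the center server $S_N$. Graph-based PIR model: files are independent, each uniform on $\mathbb{F}_2^L$; a user wants $W_\theta$, $\theta$ uniform on $[K]$ and independent of the files; it sends queries $Q_1,\dots,Q_N$ (independent of the files) to the servers; server $i$ answers $A_i$, a deterministic function of $Q_i$ and the files stored on it. Reliability: $W_\theta$ is determined by all answers and queries. Privacy: $H(\theta\mid Q_i,W_{S_i})=\log K$ for every server $i$, where $W_{S_i}$ is the set of files on server $i$. The rate is $L/\sum_i H(A_i)$; the PIR capacity is the supremum of rates over all schemes and all file lengths $L$. *)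

(* Defs.v *)
From HB Require Import structures.
From mathcomp Require Import all_boot all_order all_algebra.
From mathcomp Require Import reals exp.
Unset Printing Implicit Defensive.
Import Order.TTheory GRing.Theory Num.Theory.
Local Open Scope ring_scope.

Section PIR.
Variable R : realType.

Definition log2 (x : R) : R := ln x / ln 2.

Definition entropy {Omega T : finType} (P : Omega -> R) (X : Omega -> T) : R :=
  - \sum_(t : T) (let pt := \sum_(o | X o == t) P o in pt * log2 pt).

Definition cond_entropy {Omega T U : finType} (P : Omega -> R)
  (X : Omega -> T) (Y : Omega -> U) : R :=
  entropy P (fun o => (X o, Y o)) - entropy P Y.

Definition file (L : nat) := 'rV['F_2]_L.

(** A PIR scheme for K files of length L on a set of servers [srv].
    [rnd] is the user's private randomness with distribution [rnd_p];
    query to server s, when the desired index is theta and the randomness is r,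
    is [query s theta r] (queries are thus independent of the files);
    the answer of server s is [answer s q w] where w is the tuple of all files
    (locality to the stored files is required in [valid_pir]).
    A single query alphabet and a single answer alphabet are used for all
    servers (w.l.o.g.: alphabets can be embedded into a common finite type). *)
Record pir_scheme (srv : finType) (K L : nat) := PirScheme {
  rnd : finType;
  rnd_p : rnd -> R;
  qry : finType;
  ans : finType;
  query : srv -> 'I_K -> rnd -> qry;
  answer : srv -> qry -> {ffun 'I_K -> file L} -> ans
}.
Arguments rnd {srv K L} p.
Arguments rnd_p {srv K L} p _.
Arguments qry {srv K L} p.
Arguments ans {srv K L} p.
Arguments query {srv K L} p _ _ _.
Arguments answer {srv K L} p _ _ _.


Definition omega {srv : finType} {K L : nat} (S : pir_scheme srv K L) :=
  ('I_K * rnd S * {ffun 'I_K -> file L})%type.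

(** joint law: theta uniform on [K], independent of the randomness (law rnd_p),
    files independent and uniform on F_2^L, independent of (theta, randomness) *)
Definition prob {srv : finType} {K L : nat} (S : pir_scheme srv K L)
  (o : omega S) : R :=
  K%:R^-1 * rnd_p S o.1.2 * (#|{ffun 'I_K -> file L}|%:R)^-1.

Definition Theta {srv : finType} {K L : nat} (S : pir_scheme srv K L) (o : omega S) : 'I_K := o.1.1.
Definition Wdes {srv : finType} {K L : nat} (S : pir_scheme srv K L) (o : omega S) : file L :=
  o.2 o.1.1.
Definition Qry {srv : finType} {K L : nat} (S : pir_scheme srv K L) (s : srv) (o : omega S) : qry S :=
  query S s o.1.1 o.1.2.
Definition Ans {srv : finType} {K L : nat} (S : pir_scheme srv K L) (s : srv) (o : omega S) : ans S :=
  answer S s (Qry S s o) o.2.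
Definition Wstored {srv : finType} {K L : nat} (store : srv -> {set 'I_K}) (S : pir_scheme srv K L)
  (s : srv) (o : omega S) : {ffun 'I_K -> option (file L)} :=
  [ffun j => if j \in store s then Some (o.2 j) else None].
Definition AllAQ {srv : finType} {K L : nat} (S : pir_scheme srv K L) (o : omega S) :=
  ([ffun s => Ans S s o], [ffun s => Qry S s o]).

Definition valid_pir {srv : finType} {K L : nat} (store : srv -> {set 'I_K})
  (S : pir_scheme srv K L) : Prop :=
  [/\ (0 < K)%N,
      (forall r, 0 <= rnd_p S r) /\ \sum_r rnd_p S r = 1,
      (forall s q (w w' : {ffun 'I_K -> file L}), (forall j, j \in store s -> w j = w' j) ->
          answer S s q w = answer S s q w'),
      (* reliability: H(W_theta | A_[N], Q_[N]) = 0 *)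
      cond_entropy (prob S) (Wdes S) (AllAQ S) = 0 &
      (* privacy: H(theta | Q_s, W_{S_s}) = log K for every server s *)
      (forall s, cond_entropy (prob S) (Theta S)
                   (fun o => (Qry S s o, Wstored store S s o)) = log2 K%:R)].

Definition pir_rate {srv : finType} {K L : nat} (S : pir_scheme srv K L) : R :=
  L%:R / \sum_(s : srv) entropy (prob S) (Ans S s).

(** the star graph S_N with N = K+1 vertices: servers are [option 'I_K],
    leaf [Some i] stores file W_i, the center [None] stores all files *)
Definition star_store (K : nat) (s : option 'I_K) : {set 'I_K} :=
  if s is Some i then [set i] else [set: 'I_K].

End PIR.

Arguments valid_pir {R srv K L} store S.
Arguments pir_rate {R srv K L} S.

(* Main.v *)
Require Import Defs.
From HB Require Import structures.
From mathcomp Require Import all_boot all_order all_algebra.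
From mathcomp Require Import reals exp.
From mathcomp Require Import lra zify.
Import Order.TTheory GRing.Theory Num.Theory.
Set Implicit Arguments.
Unset Strict Implicit.
Local Open Scope ring_scope.

Section LnFacts.
Variable R : realType.

Lemma ln_le_sub1 (x : R) : 0 < x -> ln x <= x - 1.
Proof.
move=> x0; have := expR_ge1Dx (ln x); rewrite lnK ?posrE // => h.
lra.
Qed.

Lemma ln_lt_sub1 (x : R) : 0 < x -> x != 1 -> ln x < x - 1.
Proof.
move=> x0 x1; have : ln x != 0 by rewrite ln_eq0.
move=> /expR_gt1Dx; rewrite lnK ?posrE // => h.
lra.
Qed.

Lemma gibbs_term (p q : R) : 0 <= p -> 0 <= q -> (0 < p -> 0 < q) ->
  p * (ln q - ln p) <= q - p.
Proof.
move=> p0 q0 pq; have [->|pp] := eqVneq p 0; first by rewrite mul0r subr0.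
have pp0 : 0 < p by rewrite lt_def pp.
have qp0 := pq pp0.
rewrite -ln_div ?posrE //.
have := ln_le_sub1 (divr_gt0 qp0 pp0) => h.
rewrite -(ler_pM2l pp0) in h; apply: (le_trans h).
by rewrite mulrBr mulr1 mulrCA divff ?mulr1.
Qed.

Lemma gibbs_term_lt (p q : R) : 0 < p -> 0 < q -> p != q ->
  p * (ln q - ln p) < q - p.
Proof.
move=> pp0 qp0 pq.
rewrite -ln_div ?posrE //.
have h1 : q / p != 1.
  apply/eqP => e; move/eqP: pq; apply; apply/esym.
  by have := e; move/(congr1 (fun z => z * p)); rewrite mul1r divfK // gt_eqF.
have := ln_lt_sub1 (divr_gt0 qp0 pp0) h1 => h.
rewrite -(ltr_pM2l pp0) in h; apply: (lt_le_trans h).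
by rewrite mulrBr mulr1 mulrCA divff ?mulr1 // gt_eqF.
Qed.

Lemma gibbs (T : finType) (p q : T -> R) :
  (forall t, 0 <= p t) -> (forall t, 0 <= q t) -> (forall t, 0 < p t -> 0 < q t) ->
  \sum_t q t <= \sum_t p t ->
  \sum_t p t * ln (q t) <= \sum_t p t * ln (p t).
Proof.
move=> p0 q0 pq sq.
have h : \sum_t p t * (ln (q t) - ln (p t)) <= \sum_t (q t - p t).
  by apply: ler_sum => t _; exact: (gibbs_term (p0 t) (q0 t) (pq t)).
have e : \sum_t p t * (ln (q t) - ln (p t)) = \sum_t p t * ln (q t) - \sum_t p t * ln (p t).
  by rewrite -sumrB; apply: eq_bigr => t _; rewrite mulrBr.
have e2 : \sum_t (q t - p t) = \sum_t q t - \sum_t p t by rewrite sumrB.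
lra.
Qed.

Lemma gibbs_eq (T : finType) (p q : T -> R) :
  (forall t, 0 <= p t) -> (forall t, 0 <= q t) -> (forall t, 0 < p t -> 0 < q t) ->
  \sum_t q t <= \sum_t p t ->
  \sum_t p t * ln (q t) = \sum_t p t * ln (p t) -> forall t, p t = q t.
Proof.
move=> p0 q0 pq sq heq.
pose d t := (q t - p t) - p t * (ln (q t) - ln (p t)).
have d0 : forall t, 0 <= d t.
  by move=> t; rewrite /d subr_ge0; exact: (gibbs_term (p0 t) (q0 t) (pq t)).
have e : \sum_t p t * (ln (q t) - ln (p t)) = \sum_t p t * ln (q t) - \sum_t p t * ln (p t).
  by rewrite -sumrB; apply: eq_bigr => t _; rewrite mulrBr.
have e2 : \sum_t (q t - p t) = \sum_t q t - \sum_t p t by rewrite sumrB.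
have sd : \sum_t d t = \sum_t (q t - p t) - \sum_t p t * (ln (q t) - ln (p t)).
  by rewrite /d sumrB.
have sd0 : \sum_t d t = 0.
  apply/eqP; rewrite eq_le; apply/andP; split; first lra.
  by apply: sumr_ge0 => t _; exact: d0.
move=> t; have := @psumr_eq0P _ _ xpredT d (fun t _ => d0 t) sd0 t isT.
rewrite /d; have [->|pt] := eqVneq (p t) 0.
  by rewrite mul0r subr0 subr0 => ->.
have pt0 : 0 < p t by rewrite lt_def pt p0.
have [//|npq] := eqVneq (p t) (q t).
have := gibbs_term_lt pt0 (pq _ pt0) npq => h /eqP; rewrite subr_eq0 => /eqP h2.
by move: h; rewrite h2 ltxx.
Qed.

End LnFacts.

Section Ent.
Variable R : realType.
Variable Omega : finType.
Variable P : Omega -> R.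

Definition pX {T : finType} (X : Omega -> T) (t : T) : R := \sum_(o | X o == t) P o.
Definition ent {T : finType} (X : Omega -> T) : R := - \sum_o P o * ln (pX X (X o)).

Lemma sumX {T : finType} (X : Omega -> T) (G : T -> R) :
  \sum_o P o * G (X o) = \sum_t pX X t * G t.
Proof.
rewrite (partition_big X xpredT) //=; apply: eq_bigr => t _.
by rewrite /pX big_distrl /=; apply: eq_bigr => o /eqP ->.
Qed.

Lemma entropyE {T : finType} (X : Omega -> T) : entropy R P X = ent X / ln 2.
Proof.
rewrite /entropy /ent /log2 (sumX X (fun t => ln (pX X t))) mulNr; congr (- _).
rewrite big_distrl /=; apply: eq_bigr => t _; by rewrite mulrA.
Qed.

Hypothesis P0 : forall o, 0 <= P o.
Hypothesis P1 : \sum_o P o = 1.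

Lemma pX_ge0 {T : finType} (X : Omega -> T) t : 0 <= pX X t.
Proof. by apply: sumr_ge0 => o _; exact: P0. Qed.

Lemma sum_pX {T : finType} (X : Omega -> T) : \sum_t pX X t = 1.
Proof.
have := sumX X (fun _ => 1); rewrite (eq_bigr P); last by move=> o _; rewrite mulr1.
by rewrite P1 => ->; apply: eq_bigr => t _; rewrite mulr1.
Qed.

Lemma pX_le1 {T : finType} (X : Omega -> T) t : pX X t <= 1.
Proof.
rewrite -P1 /pX [X in _ <= X](bigID (fun o => X o == t)) /= lerDl.
by apply: sumr_ge0 => o _; exact: P0.
Qed.

Lemma sub_sum (a b : pred Omega) : (forall o, a o -> b o) ->
  \sum_(o | a o) P o <= \sum_(o | b o) P o.
Proof.
move=> ab; rewrite [X in X <= _]big_mkcond [X in _ <= X]big_mkcond /=.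
apply: ler_sum => o _; case: (boolP (a o)) => h; first by rewrite ab.
by case: (b o) => //; exact: P0.
Qed.

Lemma pX_ge_P {T : finType} (X : Omega -> T) o : P o <= pX X (X o).
Proof.
rewrite /pX (bigD1 o) //= lerDl; by apply: sumr_ge0 => o' _; exact: P0.
Qed.

Lemma pX_gt0 {T : finType} (X : Omega -> T) o : 0 < P o -> 0 < pX X (X o).
Proof. by move=> h; apply: (lt_le_trans h); exact: pX_ge_P. Qed.

Lemma ent_dp {T U : finType} (X : Omega -> T) (Y : Omega -> U) :
  (forall o o', Y o = Y o' -> X o = X o') -> ent X <= ent Y.
Proof.
move=> YX; rewrite /ent lerN2; apply: ler_sum => o _.
have [->|po] := eqVneq (P o) 0; first by rewrite !mul0r.
have po0 : 0 < P o by rewrite lt_def po P0.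
rewrite ler_wpM2l ?P0 // ler_ln ?posrE ?pX_gt0 //.
apply: sub_sum => o' /eqP h; apply/eqP; exact: YX.
Qed.

Lemma ent_const {T : finType} (c : T) : ent (fun _ => c) = 0.
Proof.
have e : pX (fun _ : Omega => c) c = 1.
  by rewrite /pX (eq_bigl xpredT) ?P1 // => o /=; rewrite eqxx.
rewrite /ent big1 ?oppr0 // => o _; by rewrite e ln1 mulr0.
Qed.

Lemma ent_ge0 {T : finType} (X : Omega -> T) : 0 <= ent X.
Proof.
rewrite /ent oppr_ge0; apply: sumr_le0 => o _.
by rewrite mulr_ge0_le0 ?P0 // ln_le0 // pX_le1.
Qed.

Lemma ent_le0_const {T U : finType} (X : Omega -> T) (c : U) :
  (forall o o', X o = X o') -> ent X <= 0.
Proof. move=> h; rewrite -(ent_const c); apply: ent_dp => o o' _; exact: h. Qed.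


Lemma ent_pair_repr {T U : finType} (X : Omega -> T) (Y : Omega -> U) :
  let Z := fun o => (X o, Y o) in
  ent X + ent Y = - \sum_t pX Z t * ln (pX X t.1 * pX Y t.2) /\
  ent Z = - \sum_t pX Z t * ln (pX Z t).
Proof.
move=> Z; split; last by rewrite /ent (sumX Z (fun z => ln (pX Z z))).
rewrite -(sumX Z (fun z => ln (pX X z.1 * pX Y z.2))).
rewrite /ent -opprD -big_split /=; congr (- _); apply: eq_bigr => o _.
have [->|po] := eqVneq (P o) 0; first by rewrite !mul0r addr0.
have po0 : 0 < P o by rewrite lt_def po P0.
by rewrite lnM ?posrE ?pX_gt0 // mulrDr.
Qed.

Lemma pX_marg {T U : finType} (Z : Omega -> T) (f : T -> U) t :
  pX Z t <= pX (fun o => f (Z o)) (f t).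
Proof. by apply: sub_sum => o /eqP ->. Qed.

Lemma ent_sa_aux {T U : finType} (X : Omega -> T) (Y : Omega -> U) :
  let Z := fun o => (X o, Y o) in
  [/\ (forall t, 0 <= pX Z t), (forall t, 0 <= pX X t.1 * pX Y t.2),
      (forall t, 0 < pX Z t -> 0 < pX X t.1 * pX Y t.2) &
      \sum_t pX X t.1 * pX Y t.2 <= \sum_t pX Z t].
Proof.
move=> Z; split.
- by move=> t; exact: pX_ge0.
- by move=> t; rewrite mulr_ge0 ?pX_ge0.
- move=> [x y] /= h; rewrite mulr_gt0 //.
    by apply: (lt_le_trans h); exact: (pX_marg Z fst (x, y)).
  by apply: (lt_le_trans h); exact: (pX_marg Z snd (x, y)).
- rewrite sum_pX -(pair_bigA _ (fun x y => pX X x * pX Y y)) /=.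
  rewrite (eq_bigr (fun x => pX X x)) ?sum_pX // => x _.
  by rewrite -mulr_sumr sum_pX mulr1.
Qed.

Lemma ent_sa {T U : finType} (X : Omega -> T) (Y : Omega -> U) :
  ent (fun o => (X o, Y o)) <= ent X + ent Y.
Proof.
have [e1 e2] := ent_pair_repr X Y; rewrite e1 e2 lerN2.
have [h1 h2 h3 h4] := ent_sa_aux X Y.
exact: gibbs.
Qed.

Lemma ent_sa_eq {T U : finType} (X : Omega -> T) (Y : Omega -> U) :
  ent (fun o => (X o, Y o)) = ent X + ent Y ->
  forall t, pX (fun o => (X o, Y o)) t = pX X t.1 * pX Y t.2.
Proof.
have [e1 e2] := ent_pair_repr X Y; rewrite e1 e2 => /oppr_inj e.
have [h1 h2 h3 h4] := ent_sa_aux X Y.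
exact: (gibbs_eq h1 h2 h3 h4 (esym e)).
Qed.

Lemma ent_le_card {T : finType} (X : Omega -> T) : ent X <= ln (#|T|%:R).
Proof.
have cT : (0 < #|T|)%N.
  move: P1; case: (pickP (fun _ : Omega => true)) => [o _ _|h]; first by apply/(@card_gt0P _ T); exists (X o).
  by rewrite big_pred0 // => /eqP; rewrite eq_sym oner_eq0.
have cT0 : 0 < (#|T|%:R : R) by rewrite ltr0n.
have h : \sum_t pX X t * ln (#|T|%:R^-1) <= \sum_t pX X t * ln (pX X t).
  apply: gibbs; first exact: pX_ge0.
  - by move=> t; rewrite invr_ge0 ler0n.
  - by move=> t _; rewrite invr_gt0.
  - by rewrite sum_pX sumr_const -[_ *+ _]mulr_natr mulVf ?gt_eqF.
move: h; rewrite /ent (sumX X (fun t => ln (pX X t))) -big_distrl /= sum_pX mul1r lnV ?posrE //.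
by move=> h; rewrite lerNl.
Qed.

Lemma ent_fam {J T : finType} (X : Omega -> {ffun J -> T}) :
  ent X <= \sum_(j <- enum J) ent (fun o => X o j).
Proof.
pose Xs (s : seq J) o := [ffun j => if j \in s then Some (X o j) else None].
have h1 : ent X <= ent (Xs (enum J)).
  apply: ent_dp => o o' /ffunP e; apply/ffunP => j; have := e j.
  by rewrite !ffunE mem_enum /=; case.
apply: (le_trans h1); elim: (enum J) => [|j s IH].
  rewrite big_nil; apply: (ent_le0_const tt) => o o'.
  by apply/ffunP => j; rewrite !ffunE.
rewrite big_cons.
have hp : ent (Xs (j :: s)) <= ent (fun o => (X o j, Xs s o)).
  apply: ent_dp => o o' [e1 e2]; apply/ffunP => j'; rewrite !ffunE in_cons.
  case: (eqVneq j' j) => [->|_] /=; first by rewrite e1.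
  by move/ffunP: e2 => /(_ j'); rewrite !ffunE.
apply: (le_trans hp); apply: (le_trans (ent_sa _ _)); by rewrite lerD2l.
Qed.

Lemma ent_det {T U : finType} (X : Omega -> T) (Y : Omega -> U) :
  ent (fun o => (X o, Y o)) = ent Y ->
  forall o o', 0 < P o -> 0 < P o' -> Y o = Y o' -> X o = X o'.
Proof.
set Z := fun o => (X o, Y o) => e o o' po po' eY.
apply/eqP/negPn/negP => nX.
have d0 : forall o1, 0 <= P o1 * (ln (pX Y (Y o1)) - ln (pX Z (Z o1))).
  move=> o1; have [->|p1] := eqVneq (P o1) 0; first by rewrite mul0r.
  have p10 : 0 < P o1 by rewrite lt_def p1 P0.
  rewrite mulr_ge0 ?P0 // subr_ge0 ler_ln ?posrE ?pX_gt0 //.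
  by apply: sub_sum => o2 /eqP; rewrite /Z => -[_ ->].
have s0 : \sum_o1 P o1 * (ln (pX Y (Y o1)) - ln (pX Z (Z o1))) = 0.
  under eq_bigr do rewrite mulrBr.
  rewrite sumrB; move: e; rewrite /ent => /oppr_inj ->; by rewrite subrr.
have := @psumr_eq0P _ _ xpredT _ (fun o1 _ => d0 o1) s0 o isT.
move/eqP; rewrite mulf_eq0 (gt_eqF po) /= subr_eq0 => /eqP.
move/ln_inj; rewrite !posrE !pX_gt0 // => /(_ isT isT) epz.
have : pX Z (Z o) + P o' <= pX Y (Y o).
  rewrite [X in _ <= X](bigID (fun o2 => Z o2 == Z o)) /= lerD //.
    rewrite le_eqVlt; apply/orP; left; apply/eqP; apply: eq_bigl => o2.
    case: (eqVneq (Z o2) (Z o)) => [ez|]; rewrite ?andbT ?andbF //.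
    by move: ez; rewrite /Z => -[_ ->]; rewrite eqxx.
  rewrite (bigD1 o') /=; last first.
    by rewrite eY eqxx /Z /= xpair_eqE negb_and eq_sym nX.
  rewrite lerDl; by apply: sumr_ge0 => o2 _; exact: P0.
rewrite epz; lra.
Qed.

End Ent.
Arguments pX {R Omega} P {T} X t.
Arguments ent {R Omega} P {T} X.
Arguments sumX {R Omega} P {T} X G.
Arguments entropyE {R Omega} P {T} X.
Arguments pX_ge0 {R Omega P} P0 {T} X t.
Arguments sum_pX {R Omega P} P1 {T} X.
Arguments pX_le1 {R Omega P} P0 P1 {T} X t.
Arguments sub_sum {R Omega P} P0 a b _.
Arguments pX_ge_P {R Omega P} P0 {T} X o.
Arguments pX_gt0 {R Omega P} P0 {T} X o _.
Arguments ent_dp {R Omega P} P0 {T U} X Y _.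
Arguments ent_const {R Omega P} P1 {T} c.
Arguments ent_ge0 {R Omega P} P0 P1 {T} X.
Arguments ent_le0_const {R Omega P} P0 P1 {T U} X c _.
Arguments ent_sa {R Omega P} P0 P1 {T U} X Y.
Arguments ent_sa_eq {R Omega P} P0 P1 {T U} X Y _ t.
Arguments ent_le_card {R Omega P} P0 P1 {T} X.
Arguments ent_fam {R Omega P} P0 P1 {J T} X.
Arguments ent_det {R Omega P} P0 {T U} X Y _ o o' _ _ _.

Section Prod.
Variables (R : realType) (X W : finType) (p : X -> R) (u : W -> R).
Hypotheses (p0 : forall x, 0 <= p x) (p1 : \sum_x p x = 1)
  (u0 : forall w, 0 <= u w) (u1 : \sum_w u w = 1).

Lemma prod0 : forall o : X * W, 0 <= p o.1 * u o.2.
Proof. by move=> o; rewrite mulr_ge0. Qed.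

Lemma prod1 : \sum_(o : X * W) p o.1 * u o.2 = 1.
Proof.
rewrite -(pair_bigA _ (fun x w => p x * u w)) /=.
rewrite (eq_bigr p) ?p1 // => x _; by rewrite -mulr_sumr u1 mulr1.
Qed.

Lemma ent_concave {A : finType} (F : X -> W -> A) :
  \sum_x p x * ent u (F x) <=
  ent (fun o : X * W => p o.1 * u o.2) (fun o => F o.1 o.2).
Proof.
set mu := pX (fun o : X * W => p o.1 * u o.2) (fun o => F o.1 o.2).
rewrite /ent -(pair_bigA _ (fun x w => p (x, w).1 * u (x, w).2 * ln (mu (F (x, w).1 (x, w).2)))) /=.
rewrite -sumrN; apply: ler_sum => x _.
rewrite [X in _ <= - X](eq_bigr (fun w => p x * (u w * ln (mu (F x w))))); last by move=> w _; rewrite mulrA.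
rewrite -mulr_sumr.
have [->|px] := eqVneq (p x) 0; first by rewrite !mul0r oppr0.
have px0 : 0 < p x by rewrite lt_def px p0.
rewrite mulrN lerN2 ler_pM2l //.
rewrite (sumX u (F x) (fun a => ln (mu a))) (sumX u (F x) (fun a => ln (pX u (F x) a))).
apply: gibbs.
- by move=> t; apply: pX_ge0.
- by move=> t; apply: pX_ge0; exact: prod0.
- move=> a ha; apply: (lt_le_trans (mulr_gt0 px0 ha)).
  apply: le_trans (sub_sum prod0 (fun o : X * W => (o.1 == x) && (F o.1 o.2 == a)) _ _); last first.
    by move=> o /andP[_ ->].
  rewrite -(pair_big_dep (fun x' => x' == x) (fun x' w => F x' w == a) (fun x' w => p x' * u w)) /=.
  by rewrite big_pred1_eq /pX mulr_sumr.
- by rewrite !sum_pX // ?prod1 //; exact: prod0.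
Qed.
End Prod.


Arguments rnd_p {R srv K L} p _.
Arguments query {R srv K L} p _ _ _.
Arguments answer {R srv K L} p _ _ _.
Arguments rnd {R srv K L} p.
Arguments qry {R srv K L} p.
Arguments ans {R srv K L} p.
Arguments prob {R srv K L} S o.
Arguments Ans {R srv K L} S s o.
Arguments Qry {R srv K L} S s o.
Arguments Theta {R srv K L} S o.
Arguments Wdes {R srv K L} S o.
Arguments AllAQ {R srv K L} S o.
Arguments Wstored {R srv K L} store S s o.
Arguments omega {R srv K L} S.
Arguments cond_entropy {R Omega T U} P X Y.
Arguments entropy {R Omega T} P X.

Lemma sum_option (R : nmodType) (I : finType) (f : option I -> R) :
  \sum_(s : option I) f s = f None + \sum_i f (Some i).
Proof.
rewrite (bigD1 None) //=; congr (_ + _).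
rewrite (reindex_omap Some (fun s => s)) //=; last by case.
by apply: eq_bigl => i; rewrite eqxx.
Qed.

Section Main.
Variables (R : realType) (K L : nat) (S : pir_scheme R (option 'I_K) K L).
Hypothesis HV : valid_pir (@star_store K) S.

Let FT := {ffun 'I_K -> file L}.
Let N := #|FT|.
Let rho := rnd_p S.
Definition uu : FT -> R := fun _ => (#|{ffun 'I_K -> file L}|%:R)^-1.
Definition pth (x : 'I_K * rnd S) : R := K%:R^-1 * rnd_p S x.2.

Lemma K_gt0 : (0 < K)%N. Proof. by case: HV. Qed.
Lemma rho0 : forall r, 0 <= rnd_p S r. Proof. by case: HV => _ [] . Qed.
Lemma rho1 : \sum_r rnd_p S r = 1. Proof. by case: HV => _ []. Qed.

Lemma N_gt0 : (0 < #|{ffun 'I_K -> file L}|)%N.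
Proof. by apply/card_gt0P; exists [ffun _ => 0]. Qed.

Lemma uu0 : forall w, 0 <= uu w.
Proof. by move=> w; rewrite /uu invr_ge0 ler0n. Qed.

Lemma uu1 : \sum_w uu w = 1.
Proof.
rewrite /uu sumr_const -[_ *+ _]mulr_natr mulVf // pnatr_eq0 -lt0n; exact: N_gt0.
Qed.

Lemma pth0 : forall x, 0 <= pth x.
Proof. by move=> x; rewrite /pth mulr_ge0 ?invr_ge0 ?ler0n ?rho0. Qed.

Lemma pth1 : \sum_x pth x = 1.
Proof.
rewrite -(pair_bigA _ (fun k r => pth (k, r))) /pth /=.
rewrite (eq_bigr (fun _ => K%:R^-1)); last by move=> k _; rewrite -mulr_sumr rho1 mulr1.
rewrite sumr_const card_ord -[_ *+ _]mulr_natr mulVf // pnatr_eq0 -lt0n; exact: K_gt0.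
Qed.

Lemma probE (o : omega S) : prob S o = pth o.1 * uu o.2.
Proof. by []. Qed.

Lemma prob0 : forall o, 0 <= prob S o.
Proof. exact: prod0 pth0 uu0. Qed.

Lemma prob1 : \sum_o prob S o = 1.
Proof. exact: prod1 pth1 uu1. Qed.

Definition sigma (s : option 'I_K) (q : qry S) : R := ent uu (fun w => answer S s q w).

Lemma sigma_ge0 s q : 0 <= sigma s q.
Proof. by rewrite /sigma; apply: ent_ge0; [exact: uu0 | exact: uu1]. Qed.

Definition Pq (s : option 'I_K) (k : 'I_K) (q : qry S) : R := pX (rnd_p S) (query S s k) q.

Lemma stepA s : \sum_x pth x * sigma s (query S s x.1 x.2) <= ent (prob S) (Ans S s).
Proof.
exact: (ent_concave pth0 pth1 uu0 uu1 (fun x w => answer S s (query S s x.1 x.2) w)).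
Qed.

Lemma sum_omega1 (G : 'I_K * rnd S -> bool) :
  \sum_(o : omega S | G o.1) prob S o = \sum_(x | G x) pth x.
Proof.
rewrite (eq_bigr (fun o : omega S => pth o.1 * uu o.2)) //.
rewrite (eq_bigl (fun o : omega S => G o.1 && xpredT o.2)); last by move=> o; rewrite andbT.
rewrite -(pair_big G xpredT (fun x w => pth x * uu w)) /=.
by apply: eq_bigr => x _; rewrite -mulr_sumr uu1 mulr1.
Qed.

Lemma sum_pth (k : 'I_K) (g : rnd S -> bool) :
  \sum_(x | (x.1 == k) && g x.2) pth x = K%:R^-1 * \sum_(r | g r) rnd_p S r.
Proof.
rewrite -(pair_big_dep (fun k' => k' == k) (fun _ r => g r) (fun k' r => pth (k', r))) /=.
by rewrite big_pred1_eq /pth mulr_sumr.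
Qed.

Lemma ln2_gt0 : 0 < ln (2 : R).
Proof. by apply: ln_gt0; rewrite ltr1n. Qed.

Lemma K_pos : 0 < (K%:R : R).
Proof. by rewrite ltr0n K_gt0. Qed.

Lemma ent_Theta : ent (prob S) (Theta S) = ln K%:R.
Proof.
have pt : forall k, pX (prob S) (Theta S) k = K%:R^-1.
  move=> k; rewrite /pX /Theta.
  rewrite (eq_bigl (fun o : omega S => (fun x => (x.1 == k) && true) o.1)); last first.
    by move=> o; rewrite andbT.
  by rewrite (sum_omega1 (fun x => (x.1 == _) && true)) (sum_pth _ xpredT) rho1 mulr1.
rewrite /ent (eq_bigr (fun o => prob S o * ln (K%:R^-1))); last by move=> o _; rewrite pt.
rewrite -big_distrl /= prob1 mul1r lnV ?opprK // posrE; exact: K_pos.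
Qed.

Lemma stepB s k k' q : Pq s k q = Pq s k' q.
Proof.
case: HV => _ _ _ _ /(_ s) hp.
set Y := fun o : omega S => (Qry S s o, Wstored (@star_store K) S s o).
have e : ent (prob S) (fun o => (Theta S o, Y o)) = ent (prob S) (Theta S) + ent (prob S) Y.
  move: hp; rewrite /cond_entropy !entropyE /log2 ent_Theta -mulrBl => /(congr1 (fun z => z * ln 2)).
  rewrite !divfK ?gt_eqF ?ln2_gt0 // => h; rewrite -h; lra.
have hz := ent_sa_eq prob0 prob1 (Theta S) Y e.
have pt : forall k, pX (prob S) (Theta S) k = K%:R^-1.
  move=> k0; rewrite /pX /Theta.
  rewrite (eq_bigl (fun o : omega S => (fun x => (x.1 == k0) && true) o.1)); last first.
    by move=> o; rewrite andbT.
  by rewrite (sum_omega1 (fun x => (x.1 == _) && true)) (sum_pth _ xpredT) rho1 mulr1.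
have key : forall k0, K%:R^-1 * Pq s k0 q =
    \sum_(y | y.1 == q) K%:R^-1 * pX (prob S) Y y.
  move=> k0.
  have -> : K%:R^-1 * Pq s k0 q =
      \sum_(o : omega S | (fun x => (x.1 == k0) && (query S s x.1 x.2 == q)) o.1) prob S o.
    rewrite (sum_omega1 (fun x => (x.1 == k0) && (query S s x.1 x.2 == q))).
    rewrite (eq_bigl (fun x => (x.1 == k0) && (query S s k0 x.2 == q))); last first.
      by move=> [k1 r] /=; case: eqP => // ->.
    by rewrite (sum_pth k0 (fun r => query S s k0 r == q)).
  rewrite (partition_big Y (fun y => y.1 == q)) /=; last first.
    by move=> o /andP[_ /eqP <-].
  apply: eq_bigr => y /eqP yq.
  rewrite -(pt k0) -(hz (k0, y)) /pX; apply: eq_bigl => o.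
  rewrite xpair_eqE /Theta /Y /Qry.
  case: (eqVneq (o.1.1) k0) => //= _.
  case: (eqVneq (query S s o.1.1 o.1.2, Wstored (@star_store K) S s o) y) => [ey|ny].
    by rewrite -ey /= in yq; rewrite yq !eqxx.
  by rewrite andbF.
have h : K%:R^-1 * Pq s k q = K%:R^-1 * Pq s k' q by rewrite !key.
apply: (mulfI _ h); by rewrite invr_eq0 gt_eqF ?K_pos.
Qed.

Lemma stepC k r (w w' : {ffun 'I_K -> file L}) : 0 < rnd_p S r ->
  (forall s, answer S s (query S s k r) w = answer S s (query S s k r) w') -> w k = w' k.
Proof.
move=> r0 ha.
case: HV => _ _ _ hr _.
have e : ent (prob S) (fun o => (Wdes S o, AllAQ S o)) = ent (prob S) (AllAQ S).
  move: hr; rewrite /cond_entropy !entropyE -mulrBl => /eqP.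
  rewrite mulf_eq0 invr_eq0 (gt_eqF ln2_gt0) orbF subr_eq0 => /eqP //.
have po : forall w0 : {ffun 'I_K -> file L}, 0 < prob S ((k, r), w0).
  move=> w0; rewrite probE /pth /uu /= !mulr_gt0 // ?invr_gt0 ?ltr0n ?K_gt0 ?N_gt0 //.
have := ent_det prob0 (Wdes S) (AllAQ S) e ((k, r), w) ((k, r), w') (po w) (po w').
apply.
rewrite /AllAQ; congr (_, _); apply/ffunP => s; rewrite !ffunE //.
exact: ha.
Qed.


Lemma ent_fam' {J T : finType} (X : FT -> {ffun J -> T}) :
  ent uu X <= \sum_j ent uu (fun o => X o j).
Proof.
apply: le_trans (ent_fam uu0 uu1 X) _; rewrite big_enum /=.
by rewrite le_eqVlt; apply/orP; left; apply/eqP; apply: eq_bigl.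
Qed.

Lemma ent_id : ent uu (fun w : FT => w) = K%:R * ln (#|file L|%:R).
Proof.
have hp : forall w : FT, pX uu (fun w => w) w = uu w.
  by move=> w; rewrite /pX big_pred1_eq.
rewrite /ent (eq_bigr (fun w => uu w * ln (uu 0))); last by move=> w _; rewrite hp.
rewrite -big_distrl /= uu1 mul1r /uu lnV ?posrE ?ltr0n ?N_gt0 // opprK.
rewrite card_ffun card_ord natrX lnXn ?ltr0n ?card_gt0 //; last first.
  by apply/card_gt0P; exists 0.
by rewrite mulr_natl.
Qed.

Lemma stepD q (I : {set 'I_K}) (rk : 'I_K -> rnd S) :
  (forall k, k \in I -> 0 < rnd_p S (rk k) /\ query S None k (rk k) = q) ->
  #|I|%:R * ln (#|file L|%:R) <= sigma None q +
     \sum_(k in I) \sum_(j in I) sigma (Some j) (query S (Some j) k (rk k)).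
Proof.
move=> hI.
set lnF := ln (#|file L|%:R : R).
pose G1 := fun w : FT => answer S None q w.
pose A2 := fun w : FT => [ffun j : 'I_K => if j \in I then None else Some (w j)].
pose A3 := fun w : FT => [ffun kj : 'I_K * 'I_K => if (kj.1 \in I) && (kj.2 \in I) then
   Some (answer S (Some kj.2) (query S (Some kj.2) kj.1 (rk kj.1)) w) else None].
have inj : ent uu (fun w : FT => w) <= ent uu (fun w => (G1 w, A2 w, A3 w)).
  apply: (ent_dp uu0) => w w' [e1 e2 e3].
  apply/ffunP => k.
  case: (boolP (k \in I)) => kI; last first.
    by move/ffunP: e2 => /(_ k); rewrite !ffunE (negbTE kI) => -[].
  have [r0 qk] := hI k kI.
  apply: (@stepC k (rk k) w w' r0) => s; case: s => [j|]; last by rewrite qk.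
  case: (boolP (j \in I)) => jI.
    by move/ffunP: e3 => /(_ (k, j)); rewrite !ffunE /= kI jI => -[].
  case: HV => _ _ hloc _ _; apply: hloc => j'; rewrite /star_store inE => /eqP ->.
  by move/ffunP: e2 => /(_ j); rewrite !ffunE (negbTE jI) => -[].
have sa : ent uu (fun w => (G1 w, A2 w, A3 w)) <= ent uu G1 + ent uu A2 + ent uu A3.
  apply: le_trans (ent_sa uu0 uu1 (fun w => (G1 w, A2 w)) A3) _.
  by rewrite lerD2r; exact: (ent_sa uu0 uu1 G1 A2).
have b2 : ent uu A2 <= \sum_(j : 'I_K) (if j \in I then 0 else lnF).
  apply: le_trans (ent_fam' A2) _; apply: ler_sum => j _.
  case: (boolP (j \in I)) => jI.
    by apply: (ent_le0_const uu0 uu1 _ tt) => w w'; rewrite !ffunE jI.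
  apply: le_trans (ent_le_card uu0 uu1 (fun w : FT => w j)).
  by apply: (ent_dp uu0) => w w' e; rewrite !ffunE (negbTE jI) e.
have b3 : ent uu A3 <= \sum_(k in I) \sum_(j in I) sigma (Some j) (query S (Some j) k (rk k)).
  rewrite pair_big big_mkcond /=.
  apply: le_trans (ent_fam' A3) _; apply: ler_sum => [[k j]] _ /=.
  case: (boolP ((k \in I) && (j \in I))) => c.
    by apply: (ent_dp uu0) => w w' e; rewrite !ffunE /= c e.
  by apply: (ent_le0_const uu0 uu1 _ tt) => w w'; rewrite !ffunE /= (negbTE c).
have cnt : \sum_(j : 'I_K) (if j \in I then 0 else lnF) + #|I|%:R * lnF = K%:R * lnF.
  have -> : #|I|%:R * lnF = \sum_(j : 'I_K) (if j \in I then lnF else 0).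
    by rewrite -big_mkcond /= sumr_const mulr_natl.
  rewrite -big_split /= (eq_bigr (fun _ => lnF)); last by move=> j _; case: (j \in I); rewrite ?add0r ?addr0.
  by rewrite sumr_const card_ord mulr_natl.
have := le_trans inj sa; rewrite ent_id -/lnF /sigma -/G1 => h.
have : K%:R * lnF <= ent uu G1 + \sum_(j : 'I_K) (if j \in I then 0 else lnF) +
   \sum_(k in I) \sum_(j in I) sigma (Some j) (query S (Some j) k (rk k)).
  apply: (le_trans h); rewrite -addrA -addrA lerD2l; exact: lerD.
rewrite -cnt /sigma; lra.
Qed.

Lemma avg_min (T : finType) (a : pred T) (nu f : T -> R) :
  (forall t, 0 <= nu t) -> 0 < \sum_(t | a t) nu t ->
  exists t, [/\ a t, 0 < nu t &
     (\sum_(t | a t) nu t) * f t <= \sum_(t | a t) nu t * f t].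
Proof.
move=> nu0 M0; set M := \sum_(t | a t) nu t; set Sf := \sum_(t | a t) nu t * f t.
case: (pickP (fun t => [&& a t, 0 < nu t & M * f t <= Sf])) => [t /and3P[h1 h2 h3]|hn].
  by exists t.
exfalso.
have d0 : forall t, a t -> 0 <= nu t * (M * f t - Sf).
  move=> t at0; have := hn t; rewrite at0 /=.
  case: (eqVneq (nu t) 0) => [->|nt]; first by rewrite mul0r.
  have nt0 : 0 < nu t by rewrite lt_def nt nu0.
  rewrite nt0 /= => /negbT; rewrite -ltNge => h.
  by rewrite mulr_ge0 ?nu0 // subr_ge0 ltW.
have s0 : \sum_(t | a t) nu t * (M * f t - Sf) = 0.
  under eq_bigr do rewrite mulrBr.
  rewrite sumrB (eq_bigr (fun t => M * (nu t * f t))); last first.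
    by move=> t _; rewrite mulrCA.
  by rewrite -mulr_sumr -/Sf -big_distrl /= -/M subrr.
case: (pickP (fun t => a t && (0 < nu t))) => [t /andP[at0 nt]|hn2].
  have := psumr_eq0P d0 s0 at0; move/eqP; rewrite mulf_eq0 (gt_eqF nt) /= subr_eq0.
  by move=> /eqP e; have := hn t; rewrite at0 nt e lexx.
have : M = 0.
  rewrite /M big1 // => t at0; apply/eqP; rewrite eq_le nu0 andbT.
  by have := hn2 t; rewrite at0 /= => /negbT; rewrite -leNgt.
by move=> e; move: M0; rewrite -/M e ltxx.
Qed.

Lemma sum_part (O T : finType) (X : O -> T) (F : O -> R) :
  \sum_t \sum_(o | X o == t) F o = \sum_o F o.
Proof. by rewrite [RHS](partition_big X xpredT). Qed.

Definition k0 : 'I_K := Ordinal K_gt0.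

Definition cc (s : option 'I_K) : R := \sum_q Pq s k0 q * sigma s q.

Lemma cc_ge0 s : 0 <= cc s.
Proof.
by apply: sumr_ge0 => q _; rewrite mulr_ge0 ?sigma_ge0 //; apply: pX_ge0; exact: rho0.
Qed.

Lemma cc_eq s k : \sum_r rnd_p S r * sigma s (query S s k r) = cc s.
Proof.
rewrite (sumX (rnd_p S) (query S s k) (sigma s)) /cc.
by apply: eq_bigr => q _; rewrite -/(Pq s k q) (stepB s k k0).
Qed.

Lemma stepA' s : cc s <= ent (prob S) (Ans S s).
Proof.
apply: le_trans (stepA s).
rewrite -(pair_bigA _ (fun k r => pth (k, r) * sigma s (query S s (k, r).1 (k, r).2))) /=.
rewrite (eq_bigr (fun k => K%:R^-1 * cc s)); last first.
  move=> k _; rewrite -(cc_eq s k) mulr_sumr; apply: eq_bigr => r _.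
  by rewrite /pth /= mulrA.
rewrite sumr_const card_ord -[_ *+ K]mulr_natl mulrA mulfV ?mul1r // gt_eqF //; exact: K_pos.
Qed.

Lemma stepE (I : {set 'I_K}) :
  #|I|%:R * ln (#|file L|%:R) <= cc None + #|I|%:R * \sum_(j in I) cc (Some j).
Proof.
set lnF := ln (#|file L|%:R : R).
set Ck := fun k r => \sum_(j in I) sigma (Some j) (query S (Some j) k r).
have Ck0 : forall k r, 0 <= Ck k r.
  by move=> k r; apply: sumr_ge0 => j _; exact: sigma_ge0.
have claim : forall q, Pq None k0 q * (#|I|%:R * lnF) <=
    Pq None k0 q * sigma None q +
    \sum_(k in I) \sum_(r | query S None k r == q) rnd_p S r * Ck k r.
  move=> q; case: (eqVneq (Pq None k0 q) 0) => [->|pq].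
    rewrite !mul0r add0r; apply: sumr_ge0 => k _; apply: sumr_ge0 => r _.
    by rewrite mulr_ge0 ?rho0 ?Ck0.
  have pq0 : 0 < Pq None k0 q by rewrite lt_def pq; apply: pX_ge0; exact: rho0.
  have ex : forall k, exists r, [/\ 0 < rnd_p S r, query S None k r == q &
      Pq None k0 q * Ck k r <= \sum_(r | query S None k r == q) rnd_p S r * Ck k r].
    move=> k; have := @avg_min _ (fun r => query S None k r == q) (rnd_p S) (Ck k) rho0.
    rewrite -/(pX (rnd_p S) (query S None k) q) -/(Pq None k q) (stepB None k k0).
    by case/(_ pq0) => r [h1 h2 h3]; exists r.
  have [rk hrk] := fin_all_exists ex.
  have hD := @stepD q I rk.
  have := hD (fun k _ => let: And3 h1 h2 _ := hrk k in conj h1 (eqP h2)).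
  move=> /(ler_wpM2l (ltW pq0)); rewrite mulrDr => h; apply: (le_trans h).
  rewrite lerD2l mulr_sumr; apply: ler_sum => k _.
  by have [_ _ h3] := hrk k.
have : \sum_q Pq None k0 q * (#|I|%:R * lnF) <= \sum_q (Pq None k0 q * sigma None q +
    \sum_(k in I) \sum_(r | query S None k r == q) rnd_p S r * Ck k r).
  by apply: ler_sum => q _; exact: claim.
rewrite -big_distrl /= (sum_pX rho1) mul1r big_split /=.
rewrite -/(cc None) => h; apply: (le_trans h); rewrite lerD2l.
rewrite exchange_big /=.
rewrite (eq_bigr (fun k => \sum_(j in I) cc (Some j))); last first.
  move=> k _; rewrite (sum_part (query S None k) (fun r => rnd_p S r * Ck k r)).
  rewrite /Ck; under eq_bigr do rewrite mulr_sumr.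
  rewrite exchange_big /=; apply: eq_bigr => j _; exact: cc_eq.
by rewrite sumr_const mulr_natl.
Qed.

Lemma card_file : #|file L| = (2 ^ L)%N.
Proof. by rewrite card_mx card_Fp // mul1n. Qed.

Lemma lnF_eq : ln (#|file L|%:R : R) = L%:R * ln 2.
Proof. by rewrite card_file natrX lnXn ?ltr0n // mulr_natl. Qed.

Lemma sum_ent_ge (t : nat) : (t * t <= K)%N -> (0 < t)%N ->
  t%:R * ln (#|file L|%:R : R) <= \sum_s ent (prob S) (Ans S s).
Proof.
move=> ttK t0.
have blt : forall (b i : 'I_t), (b * t + i < K)%N.
  move=> b i; have := ltn_ord b; have := ltn_ord i; nia.
pose f (b i : 'I_t) : 'I_K := Ordinal (blt b i).
have finj : forall b, injective (f b).
  by move=> b i i' /(congr1 val) /= /eqP; rewrite eqn_add2l => /eqP /val_inj.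
pose I b := [set f b i | i : 'I_t].
have cI : forall b, #|I b| = t by move=> b; rewrite card_imset ?card_ord //; exact: finj.
set lnF := ln (#|file L|%:R : R).
have h1 : \sum_(b : 'I_t) (t%:R * lnF) <=
          \sum_(b : 'I_t) (cc None + t%:R * \sum_(j in I b) cc (Some j)).
  by apply: ler_sum => b _; have := stepE (I b); rewrite cI.
have h2 : \sum_(b : 'I_t) \sum_(j in I b) cc (Some j) <= \sum_j cc (Some j).
  rewrite (eq_bigr (fun b => \sum_(i : 'I_t) cc (Some (f b i)))); last first.
    move=> b _; rewrite big_imset //=; move=> i i' _ _; exact: finj.
  rewrite (pair_bigA _ (fun b i => cc (Some (f b i)))) /=.
  have fpinj : injective (fun p : 'I_t * 'I_t => f p.1 p.2).
    move=> [b i] [b' i'] /(congr1 val) /= e.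
    have ei : i = i' :> nat.
      by move: e => /(congr1 (fun n => (n %% t)%N)); rewrite /= !modnMDl !modn_small.
    have eb : b = b' :> nat.
      move: e; rewrite ei => /eqP; rewrite eqn_add2r eqn_mul2r => /orP[t00|/eqP //].
      by move: t0; rewrite lt0n t00.
    by congr (_, _); apply: val_inj.
  rewrite -(big_imset (fun j => cc (Some j)) (h := fun p : 'I_t * 'I_t => f p.1 p.2)) /=; last first.
    by move=> p p' _ _; exact: fpinj.
  rewrite [X in _ <= X](bigID (fun j => j \in [set f p.1 p.2 | p : 'I_t * 'I_t])) /= lerDl.
  by apply: sumr_ge0 => j _; exact: cc_ge0.
move: h1; rewrite !sumr_const card_ord big_split /= sumr_const card_ord -mulr_sumr => h1.
have tpos : 0 < (t%:R : R) by rewrite ltr0n.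
have h3 : t%:R * lnF <= cc None + \sum_j cc (Some j).
  rewrite -(ler_pM2l tpos) mulrDr.
  apply: le_trans (_ : (t%:R * lnF) *+ t <= _).
    by rewrite -[X in _ <= X]mulr_natl.
  apply: (le_trans h1); rewrite -[cc None *+ t]mulr_natl lerD2l ler_pM2l //.
apply: (le_trans h3); rewrite sum_option lerD ?stepA' //.
by apply: ler_sum => j _; exact: stepA'.
Qed.
End Main.

Lemma nat_sqrt (n : nat) : exists t, (t * t <= n < t.+1 * t.+1)%N.
Proof.
elim: n => [|n [t /andP[h1 h2]]]; first by exists 0%N.
case: (leqP (t.+1 * t.+1) n.+1) => h.
  by exists t.+1; apply/andP; split => //; nia.
by exists t; apply/andP; split => //; nia.
Qed.

Theorem theorem3 (R : realType) :
  exists c : R, exists N0 : nat,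
    forall (K L : nat) (S : pir_scheme R (option 'I_K) K L),
      (N0 <= K.+1)%N ->
      valid_pir (@star_store K) S ->
      pir_rate S <= c / Num.sqrt (K.+1)%:R.
Proof.
exists 2, 0%N => K L S _ HV.
have K0 := K_gt0 HV.
have [t /andP[tt1 tt2]] := nat_sqrt K.
have t0 : (0 < t)%N.
  case: (posnP t) => // t00; move: tt2; rewrite t00 => h; lia.
have hs := sum_ent_ge HV tt1 t0.
rewrite lnF_eq in hs.
set D := \sum_s entropy (prob S) (Ans S s).
have eD : D = (\sum_s ent (prob S) (Ans S s)) / ln 2.
  by rewrite /D big_distrl /=; apply: eq_bigr => s _; rewrite entropyE.
have l2 := ln2_gt0 R.
have htD : t%:R * L%:R <= D.
  by rewrite eD ler_pdivlMr // -mulrA.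
have s0 : 0 < Num.sqrt (K.+1%:R : R) by rewrite sqrtr_gt0 ltr0n.
rewrite /pir_rate -/D.
case: (eqVneq L 0%N) => [->|L0].
  by rewrite mul0r divr_ge0 ?ler0n // ltW.
have Lpos : 0 < (L%:R : R) by rewrite ltr0n lt0n.
have tpos : 0 < (t%:R : R) by rewrite ltr0n.
have Dpos : 0 < D by apply: lt_le_trans htD; rewrite mulr_gt0.
rewrite ler_pdivrMr // mulrAC ler_pdivlMr //.
have hsq : Num.sqrt (K.+1%:R : R) <= t.+1%:R.
  rewrite -[X in _ <= X]ger0_norm ?ler0n // -sqrtr_sqr ler_sqrt ?exprn_ge0 ?ler0n //.
  by rewrite -natrX ler_nat; exact: tt2.
have ht2 : (t.+1%:R : R) <= 2 * t%:R.
  by rewrite -natrM ler_nat; lia.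
apply: (le_trans (_ : _ <= L%:R * (2 * t%:R))).
  by rewrite ler_pM2l // (le_trans hsq ht2).
by rewrite mulrCA ler_pM2l ?ltr0n // mulrC.
Qed.
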